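(* There are absolute constants $c, c' > 0$ such that for all $d \geq 2$, $n \geq 1$ and $s \geq 1$ the following holds: if there is an $LK_d(MOD_p)$-refutation of size $s$ of the set $\neg PHP_n$, then Prover has a winning strategy for the game $G(d + c, n, c' \log s)$. (In the paper's notation: Prover has a winning strategy for $G(d+O(1), n, O(\log s))$.)
   Context: Fix a prime $p$. Formulas are built from propositional variables using the connectives $\neg$, unbounded-arity $\bigvee$, and unbounded-arity connectives $MOD_{p,i}$, $i=0,\dots,p-1$, where $MOD_{p,i}(y_1,\dots,y_k)$ means $\sum_j y_j \equiv i \pmod p$ (there is no $\bigwedge$; conjunctions are expressed via $\neg,\bigvee$). The depth of a formula is the maximal number of alternations of connectives along a path; the size of a formula or proof is its total number of symbols. $LK(MOD_p)$ is the sequent calculus with initial sequents $\varphi \to \varphi$, the structural rules (weakening, contraction, exchange), cut, left and right $\neg$-introduction, the rule $\bigvee$:left (from $\varphi_i,\Gamma\to\Delta$ for all $i\le t$ infer $\bigvee_{i\le t}\varphi_i,\Gamma\to\Delta$), the rule $\bigvee$:right (from $\Gamma\to\Delta,\varphi_j$ infer $\Gamma\to\Delta,\bigvee_{i\le t}\varphi_i$, any $j\le t$), and the $MOD_p$-axioms: $MOD_{p,0}(\emptyset)$; $\neg MOD_{p,i}(\emptyset)$ for $i=1,\dots,p-1$; and $MOD_{p,i}(\Gamma,\phi)\equiv[(MOD_{p,i}(\Gamma)\wedge\neg\phi)\vee(MOD_{p,i-1}(\Gamma)\wedge\phi)]$ for $i=0,\dots,p-1$ ($i-1$ taken mod $p$,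 $\Gamma$ a possibly empty sequence of formulas). $LK_d(MOD_p)$ is the subsystem in which all formulas have depth at most $d$. A refutation of a set of formulas $\Sigma$ is a derivation of the empty sequent in which the sequents $\to \psi$, $\psi\in\Sigma$, may be used as additional initial sequents. $\neg PHP_n$ is the set of formulas in variables $p_{ij}$, $i\in[n+1]$, $j\in[n]$: $\bigvee_{j\in[n]}p_{ij}$ for each $i\in[n+1]$; $\neg p_{i_1 j}\vee\neg p_{i_2 j}$ for all $i_1\neq i_2\in[n+1]$, $j\in[n]$; $\neg p_{ij_1}\vee\neg p_{ij_2}$ for all $i\in[n+1]$, $j_1\ne j_2\in[n]$. The game $G(d,n,t)$ is played by Prover and Liar for $t$ rounds. In each round Prover asks one question: (P1) the truth value of a formula $\varphi$; or (P2) if Liar already gave a truth value to $\varphi=\bigvee_{i\le u}\varphi_i$: (a) if he said false, Prover may ask the truth value of some one $\varphi_j$, $j\le u$; (b) if he said true, Prover may request a witness, i.e. a $j\le u$ with $\varphi_j$ stated true. All formulas asked are in the variables of $\neg PHP_n$, of depth at most $d$ and size at most $2^t$. Liar must obey: (L0) a formula asked again gets the same answer; (L1) $\varphi$ and $\neg\varphi$ get opposite values; (L2) in (P2a) he must answer false, in (P2b) he must give value true to some $\varphi_j$, $j\le u$; (L3) every $MOD_p$-axiom asked gets true; (L4) every formula of $\neg PHP_n$ asked gets true. Liar wins a play if he can answer all $t$ questions obeying the rules; otherwise Prover wins. A winning strategy for Prover is one winning against every Liar. *)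

(* Defs.v *)
From Stdlib Require List.
From mathcomp Require Import ssreflect ssrfun ssrbool eqtype ssrnat seq div prime.

Set Implicit Arguments.
Unset Strict Implicit.
Unset Printing Implicit Defensive.

(* Formulas over variables p_(i,j) with connectives ¬, unbounded ⋁,    *)
(* and MOD_{p,i}. The modulus p is a parameter of the logic; the index *)
(* i of Mod i must satisfy i < p (predicate [wf p]).                   *)
(* Var i j stands for p_{(i+1),(j+1)} (0-based indices).               *)
Inductive form : Type :=
| Var of nat & nat
| Neg of form
| Or of list form
| Mod of nat & list form.

Fixpoint wf (p : nat) (f : form) : Prop :=
  match f with
  | Var _ _ => True
  | Neg g => wf p g
  | Or fs => (fix wfl (l : list form) : Prop :=
                match l with nil => True | g :: gs => wf p g /\ wfl gs end) fs
  | Mod i fs => i < p /\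
      (fix wfl (l : list form) : Prop :=
         match l with nil => True | g :: gs => wf p g /\ wfl gs end) fs
  end.

Fixpoint php_vars (n : nat) (f : form) : Prop :=
  match f with
  | Var i j => i < n.+1 /\ j < n
  | Neg g => php_vars n g
  | Or fs => (fix vl (l : list form) : Prop :=
                match l with nil => True | g :: gs => php_vars n g /\ vl gs end) fs
  | Mod _ fs => (fix vl (l : list form) : Prop :=
                match l with nil => True | g :: gs => php_vars n g /\ vl gs end) fs
  end.

Fixpoint fsize (f : form) : nat :=
  match f with
  | Var _ _ => 1
  | Neg g => (fsize g).+1
  | Or fs => (sumn (map fsize fs)).+1
  | Mod _ fs => (sumn (map fsize fs)).+1
  end.

Definition kind (f : form) : nat :=
  match f with Var _ _ => 0 | Neg _ => 1 | Or _ => 2 | Mod i _ => i.+3 end.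

(* depth = maximal number of alternations of connectives along a path:
   a maximal block of identical connectives along a path counts once;
   variables have depth 0. *)
Fixpoint depth (f : form) : nat :=
  match f with
  | Var _ _ => 0
  | Neg g => if kind g == 1 then depth g else (depth g).+1
  | Or fs => (fix dl (l : list form) : nat :=
                match l with
                | nil => 1
                | g :: gs => maxn (if kind g == 2 then depth g else (depth g).+1) (dl gs)
                end) fs
  | Mod i fs => (fix dl (l : list form) : nat :=
                match l with
                | nil => 1
                | g :: gs => maxn (if kind g == i.+3 then depth g else (depth g).+1) (dl gs)
                end) fs
  end.

Definition And (a b : form) : form := Neg (Or [:: Neg a; Neg b]).
Definition Equiv (a b : form) : form := And (Or [:: Neg a; b]) (Or [:: Neg b; a]).

Definition mod_axiom (p : nat) (psi : form) : Prop :=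
  psi = Mod 0 [::]
  \/ (exists i, 1 <= i < p /\ psi = Neg (Mod i [::]))
  \/ (exists i (G : list form) (phi : form), i < p /\
        psi = Equiv (Mod i (G ++ [:: phi]))
                    (Or [:: And (Mod i G) (Neg phi);
                            And (Mod ((i + (p - 1)) %% p) G) phi])).

Definition negPHP (n : nat) (psi : form) : Prop :=
  (exists i, i < n.+1 /\ psi = Or (map (fun j => Var i j) (iota 0 n)))
  \/ (exists i1 i2 j, i1 < n.+1 /\ i2 < n.+1 /\ i1 <> i2 /\ j < n /\
        psi = Or [:: Neg (Var i1 j); Neg (Var i2 j)])
  \/ (exists i j1 j2, i < n.+1 /\ j1 < n /\ j2 < n /\ j1 <> j2 /\
        psi = Or [:: Neg (Var i j1); Neg (Var i j2)]).

(* sequents; proofs are sequences (DAG-like).                          *)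
Definition sequent := (list form * list form)%type.

Inductive rule_inst (p n : nat) (prev : list sequent) : sequent -> Prop :=
| R_init phi : rule_inst p n prev ([:: phi], [:: phi])
| R_hyp psi : negPHP n psi -> rule_inst p n prev ([::], [:: psi])
| R_modax psi : mod_axiom p psi -> rule_inst p n prev ([::], [:: psi])
| R_weakl phi G D : List.In (G, D) prev -> rule_inst p n prev (phi :: G, D)
| R_weakr phi G D : List.In (G, D) prev -> rule_inst p n prev (G, D ++ [:: phi])
| R_contrl phi G D : List.In (phi :: phi :: G, D) prev -> rule_inst p n prev (phi :: G, D)
| R_contrr phi G D : List.In (G, D ++ [:: phi; phi]) prev ->
    rule_inst p n prev (G, D ++ [:: phi])
| R_exchl G1 G2 phi psi D : List.In (G1 ++ phi :: psi :: G2, D) prev ->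
    rule_inst p n prev (G1 ++ psi :: phi :: G2, D)
| R_exchr G D1 D2 phi psi : List.In (G, D1 ++ phi :: psi :: D2) prev ->
    rule_inst p n prev (G, D1 ++ psi :: phi :: D2)
| R_cut phi G D : List.In (G, D ++ [:: phi]) prev -> List.In (phi :: G, D) prev ->
    rule_inst p n prev (G, D)
| R_negl phi G D : List.In (G, D ++ [:: phi]) prev -> rule_inst p n prev (Neg phi :: G, D)
| R_negr phi G D : List.In (phi :: G, D) prev -> rule_inst p n prev (G, D ++ [:: Neg phi])
| R_orl fs G D : (forall phi, List.In phi fs -> List.In (phi :: G, D) prev) ->
    rule_inst p n prev (Or fs :: G, D)
| R_orr fs phi G D : List.In phi fs -> List.In (G, D ++ [:: phi]) prev ->
    rule_inst p n prev (G, D ++ [:: Or fs]).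

Definition is_refutation (p n d : nat) (P : list sequent) : Prop :=
  (forall k, k < size P -> rule_inst p n (take k P) (nth ([::], [::]) P k))
  /\ (exists P', P = P' ++ [:: ([::], [::])])
  /\ (forall S phi, List.In S P -> List.In phi (S.1 ++ S.2) -> wf p phi /\ depth phi <= d).

(* size of a proof: total number of symbols (formulas plus one arrow per sequent) *)
Definition seq_size (S : sequent) : nat :=
  (sumn (map fsize S.1) + sumn (map fsize S.2)).+1.
Definition proof_size (P : list sequent) : nat := sumn (map seq_size P).

Inductive question : Type :=
| AskVal of form            (* (P1) truth value of phi *)
| AskComp of form & nat     (* (P2a) phi = ⋁ fs said false: value of the j-th disjunct *)
| AskWit of form.           (* (P2b) phi = ⋁ fs said true: request a witness *)

Inductive answer : Type :=
| ABool of bool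
| AIdx of nat.

Definition history := list (question * answer).

Definition stated (qa : question * answer) : list (form * bool) :=
  match qa with
  | (AskVal phi, ABool b) => [:: (phi, b)]
  | (AskComp (Or fs) j, ABool b) => [:: (nth (Var 0 0) fs j, b)]
  | (AskWit (Or fs), AIdx j) => [:: (nth (Var 0 0) fs j, true)]
  | _ => [::]
  end.

Definition record (h : history) : list (form * bool) := flatten (map stated h).

Definition game_form (p d n t : nat) (phi : form) : Prop :=
  wf p phi /\ php_vars n phi /\ depth phi <= d /\ fsize phi <= 2 ^ t.

Definition legal_q (p d n t : nat) (R : list (form * bool)) (q : question) : Prop :=
  match q with
  | AskVal phi => game_form p d n t phi
  | AskComp phi j => List.In (phi, false) R /\ exists fs, phi = Or fs /\ j < size fs
  | AskWit phi => List.In (phi, true) R /\ exists fs, phi = Or fs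
  end.

(* rules (L0), (L1), (L3), (L4) on the set of all stated values *)
Definition consistent (p n : nat) (R : list (form * bool)) : Prop :=
  (forall phi b b', List.In (phi, b) R -> List.In (phi, b') R -> b = b')
  /\ (forall phi b b', List.In (phi, b) R -> List.In (Neg phi, b') R -> b' = ~~ b)
  /\ (forall phi b, List.In (phi, b) R -> mod_axiom p phi -> b = true)
  /\ (forall phi b, List.In (phi, b) R -> negPHP n phi -> b = true).

(* Liar's answer is legal: right shape, rule (L2), and consistency *)
Definition legal_a (p n : nat) (R : list (form * bool)) (q : question) (a : answer) : Prop :=
  match q, a with
  | AskVal _, ABool _ => True
  | AskComp _ _, ABool b => b = false
  | AskWit phi, AIdx j => exists fs, phi = Or fs /\ j < size fs
  | _, _ => False
  end
  /\ consistent p n (R ++ stated (q, a)).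

Inductive valid (p d n t : nat) : history -> Prop :=
| valid_nil : valid p d n t [::]
| valid_snoc h q a : valid p d n t h -> legal_q p d n t (record h) q ->
    legal_a p n (record h) q a -> valid p d n t (h ++ [:: (q, a)]).

Fixpoint play (sigma : history -> question) (lambda : history -> question -> answer)
    (k : nat) : history :=
  match k with
  | 0 => [::]
  | k'.+1 => let h := play sigma lambda k' in h ++ [:: (sigma h, lambda h (sigma h))]
  end.

Definition prover_wins (p d n t : nat) : Prop :=
  exists sigma : history -> question,
    forall lambda : history -> question -> answer,
      (forall k, k < t -> valid p d n t (play sigma lambda k) ->
         legal_q p d n t (record (play sigma lambda k)) (sigma (play sigma lambda k)))
      /\ ~ valid p d n t (play sigma lambda t).

(* Main.v *)
Require Import Defs.
From mathcomp Require Import ssreflect ssrfun ssrbool eqtype ssrnat seq div prime.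
From mathcomp Require Import zify.
From Stdlib Require Import ClassicalEpsilon.
From Stdlib Require List.
Import List (In).

Set Implicit Arguments.
Unset Strict Implicit.
Unset Printing Implicit Defensive.

Lemma In_cat (T : Type) (x : T) s1 s2 : In x (s1 ++ s2) <-> In x s1 \/ In x s2.
Proof. elim: s1 => [|y s IH] /=; first by tauto. rewrite IH; tauto. Qed.

Lemma In_map (T1 T2 : Type) (f : T1 -> T2) x s :
  In x (map f s) <-> exists y, In y s /\ x = f y.
Proof.
elim: s => [|y s IH] /=; first by split=> // [[y []]].
split.
- case=> [<-|H]; first by exists y; auto.
  have [z [H1 H2]] := proj1 IH H.
  by exists z; auto.
- case=> z [[<-|H] E]; first by left.
  by right; apply: (proj2 IH); exists z.
Qed.

Lemma In_map_l (T1 T2 : Type) (f : T1 -> T2) x s : In x s -> In (f x) (map f s).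
Proof. by move=> H; apply/In_map; exists x. Qed.

Lemma In_nth (T : Type) (x0 : T) s j : j < size s -> In (nth x0 s j) s.
Proof. elim: s j => [|y s IH] [|j] //= H; first by left. by right; apply: IH. Qed.

Lemma nth_In (T : Type) (x0 : T) s x : In x s -> exists j, j < size s /\ nth x0 s j = x.
Proof.
elim: s => [|y s IH] //= [<-|/IH [j [H1 H2]]]; first by exists 0.
by exists j.+1.
Qed.

Lemma In_take (T : Type) (x : T) m s : In x (take m s) -> In x s.
Proof. by move=> H; rewrite -(cat_take_drop m s); apply/In_cat; left. Qed.

Definition incl (R R' : list (form * bool)) := forall x, In x R -> In x R'.

Lemma incl_app R l : incl R (R ++ l).
Proof. by move=> x H; apply/In_cat; left. Qed.

Lemma incl_trans R1 R2 R3 : incl R1 R2 -> incl R2 R3 -> incl R1 R3.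
Proof. by move=> H1 H2 x /H1 /H2. Qed.

Lemma In_last (x : form * bool) R : In x (R ++ [:: x]).
Proof. by apply/In_cat; right; left. Qed.

Inductive PW (p d n T : nat) : list (form * bool) -> nat -> Prop :=
| PW_step R q t : legal_q p d n T R q ->
    (forall a, legal_a p n R q a -> PW p d n T (R ++ stated (q, a)) t) ->
    PW p d n T R t.+1.

Lemma PW_S p d n T R t : PW p d n T R t -> PW p d n T R t.+1.
Proof.
elim=> R0 q t0 Hq _ IH; apply: (PW_step Hq) => a Ha; exact: IH.
Qed.

Lemma PW_le p d n T R t t' : t <= t' -> PW p d n T R t -> PW p d n T R t'.
Proof.
move=> /subnK <-; elim: (t' - t) => [|k IH] //= H.
rewrite addSn; apply: PW_S; exact: IH.
Qed.

Lemma record_snoc h x : record (h ++ [:: x]) = record h ++ stated x.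
Proof. by rewrite /record map_cat flatten_cat /= cats0. Qed.

Lemma valid_snoc_inv p d n t h q a : valid p d n t (h ++ [:: (q, a)]) ->
  valid p d n t h /\ legal_a p n (record h) q a.
Proof.
move=> H; inversion H as [H0|h' q' a' Hv Hq Ha E].
- by move: (f_equal size H0); rewrite size_cat addn1.
- move: E; rewrite !cats1 => /rcons_inj [] <- <- <-; by [].
Qed.

Lemma size_play sigma lambda k : size (play sigma lambda k) = k.
Proof. by elim: k => //= k IH; rewrite size_cat IH addn1. Qed.

Lemma PW_win p d n T : PW p d n T [::] T -> prover_wins p d n T.
Proof.
move=> HT.
pose good h q := legal_q p d n T (record h) q /\
  forall a, legal_a p n (record h) q a ->
    PW p d n T (record h ++ stated (q, a)) (T - size h).-1.
pose sigma h := epsilon (inhabits (AskVal (Var 0 0))) (good h).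
have Hs : forall h, PW p d n T (record h) (T - size h) -> 0 < T - size h ->
    good h (sigma h).
  move=> h H Hpos; apply: epsilon_spec.
  inversion H as [R q t Hq Hk E1 E2]; exists q; split => // a Ha.
  by rewrite -E2 /=; apply: Hk.
exists sigma => lambda.
have key : forall k, k <= T -> valid p d n T (play sigma lambda k) ->
    PW p d n T (record (play sigma lambda k)) (T - k).
  elim=> [|k IH] Hk Hv; first by rewrite subn0.
  move: Hv; rewrite /= => /valid_snoc_inv [Hv Ha].
  have H1 := IH (ltnW Hk) Hv.
  have H2 := Hs _ (eq_ind_r (fun z => PW _ _ _ _ _ (T - z)) H1 (size_play _ _ _)).
  rewrite size_play in H2.
  have [_ H3] := H2 ltac:(lia).
  rewrite record_snoc.
  have -> : T - k.+1 = (T - k).-1 by lia.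
  by move: (H3 _ Ha); rewrite size_play.
split.
- move=> k Hk Hv; have H1 := key k (ltnW Hk) Hv.
  have := Hs (play sigma lambda k); rewrite size_play => H2.
  by case: (H2 H1 ltac:(lia)).
- move=> Hv; have := key T (leqnn T) Hv; rewrite subnn => H.
  inversion H.
Qed.

Lemma ask_val p d n T R phi t : game_form p d n T phi ->
  (forall b, consistent p n (R ++ [:: (phi, b)]) -> PW p d n T (R ++ [:: (phi, b)]) t) ->
  PW p d n T R t.+1.
Proof.
move=> Hg Hk; apply: (PW_step (q := AskVal phi)) => //.
by case=> [b|j] [//= _ Hc]; apply: Hk.
Qed.

Lemma ask_comp p d n T R fs j t : In (Or fs, false) R -> j < size fs ->
  (consistent p n (R ++ [:: (nth (Var 0 0) fs j, false)]) ->
     PW p d n T (R ++ [:: (nth (Var 0 0) fs j, false)]) t) ->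
  PW p d n T R t.+1.
Proof.
move=> HR Hj Hk; apply: (PW_step (q := AskComp (Or fs) j)).
  by split => //; exists fs.
by case=> [b|i] [//= -> Hc]; apply: Hk.
Qed.

Lemma ask_wit p d n T R fs t : In (Or fs, true) R ->
  (forall j, j < size fs -> consistent p n (R ++ [:: (nth (Var 0 0) fs j, true)]) ->
     PW p d n T (R ++ [:: (nth (Var 0 0) fs j, true)]) t) ->
  PW p d n T R t.+1.
Proof.
move=> HR Hk; apply: (PW_step (q := AskWit (Or fs))).
  by split => //; exists fs.
case=> [b|i] [] //= [fs' [[= <-] Hi]] Hc; exact: Hk.
Qed.

Lemma cons_L0 p n R x b b' : consistent p n R -> In (x, b) R -> In (x, b') R -> b = b'.
Proof. by case=> H _ H1 H2; apply: H H1 H2. Qed.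

Lemma cons_L1 p n R x b b' : consistent p n R -> In (x, b) R -> In (Neg x, b') R -> b' = ~~ b.
Proof. by case=> _ [H _] H1 H2; apply: H H1 H2. Qed.

Lemma cons_L3 p n R x b : consistent p n R -> In (x, b) R -> mod_axiom p x -> b = true.
Proof. by case=> _ [_ [H _]] H1 H2; apply: H H1 H2. Qed.

Lemma cons_L4 p n R x b : consistent p n R -> In (x, b) R -> negPHP n x -> b = true.
Proof. by case=> _ [_ [_ H]] H1 H2; apply: H H1 H2. Qed.

Lemma In_app_l (x : form * bool) R l : In x R -> In x (R ++ l).
Proof. by move=> H; apply/In_cat; left. Qed.

Lemma transfer p d n T R F1 F2 : In (Or F1, true) R -> In (Or F2, false) R ->
  (forall x, In x F1 -> In x F2 \/ ~ consistent p n (R ++ [:: (x, true)])) ->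
  PW p d n T R 2.
Proof.
move=> H1 H2 HF; apply: ask_wit H1 _ => j Hj Hc.
case: (HF _ (In_nth (Var 0 0) Hj)) => [Hin|Hn]; last by [].
have [k [Hk Ek]] := nth_In (Var 0 0) Hin.
apply: (ask_comp (fs := F2) (j := k)).
- exact: In_app_l.
- exact: Hk.
rewrite Ek => Hc'.
by have := cons_L0 Hc' (In_app_l _ (In_last _ _)) (In_last _ _).
Qed.

Definition dflt : sequent := ([::], [::]).
Definition FS (S : sequent) : list form := map Neg S.1 ++ S.2.
Definition phiS (S : sequent) : form := Or (FS S).
Definition Om (P : list sequent) m : form := Or (map (fun S => Neg (phiS S)) (take m P)).
Definition Cm (P : list sequent) m : form := Neg (Om P m).

Definition goodP p d n T (P : list sequent) : Prop :=
  (forall m, m < size P -> rule_inst p n (take m P) (nth dflt P m))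
  /\ (forall S x, In S P -> In x (S.1 ++ S.2) -> game_form p d n T x)
  /\ (forall S, In S P -> game_form p d n T (phiS S))
  /\ (forall m, m <= size P -> game_form p d n T (Om P m) /\ game_form p d n T (Cm P m)).

Lemma get_prem p d n T P R m S' t : goodP p d n T P -> consistent p n R ->
  m <= size P -> In (Cm P m, true) R -> In S' (take m P) ->
  (forall R', incl R R' -> consistent p n R' -> In (phiS S', true) R' ->
     PW p d n T R' t) ->
  PW p d n T R t.+3.
Proof.
move=> [_ [_ [Hphi HO]]] Hc Hm HC HS Hk.
have [j [Hj Ej]] := nth_In dflt HS.
apply: (ask_val (phi := Om P m)); first by case: (HO m Hm).
move=> b Hc1.
have Eb : b = false.
  have := cons_L1 Hc1 (In_last _ _) (In_app_l _ HC); by case: (b).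
subst b.
have Hj' : j < size (map (fun S => Neg (phiS S)) (take m P)) by rewrite size_map.
apply: (ask_comp (fs := map (fun S => Neg (phiS S)) (take m P)) (j := j)) => //.
  exact: In_last.
rewrite (nth_map dflt) // Ej => Hc2.
apply: (ask_val (phi := phiS S')); first by apply: Hphi; apply: In_take HS.
move=> b Hc3.
have Eb : b = true.
  have := cons_L1 Hc3 (In_last _ _) (In_app_l _ (In_last _ _)); by case: (b).
subst b.
apply: Hk => //; last exact: In_last.
by move=> x Hx; do 3 apply: In_app_l.
Qed.

Definition Refuted (R : list (form * bool)) x :=
  In (x, false) R \/ (exists y, x = Neg y /\ In (y, true) R) \/ In (Neg x, true) R.

Lemma refuted_incons p n R R' x : incl R R' -> Refuted R x ->
  ~ consistent p n (R' ++ [:: (x, true)]).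
Proof.
move=> Hi [H|[[y [-> H]]|H]] Hc.
- by have := cons_L0 Hc (In_app_l _ (Hi _ H)) (In_last _ _).
- by have := cons_L1 Hc (In_app_l _ (Hi _ H)) (In_last _ _).
- by have := cons_L1 Hc (In_last _ _) (In_app_l _ (Hi _ H)).
Qed.

Lemma prem_case p d n T P R m S S' : goodP p d n T P -> consistent p n R ->
  m <= size P -> In (Cm P m, true) R -> In (phiS S, false) R -> In S' (take m P) ->
  (forall x, In x (FS S') -> In x (FS S) \/ Refuted R x) ->
  PW p d n T R 5.
Proof.
move=> HG Hc Hm HC HS HS' Hsub.
apply: (get_prem HG Hc Hm HC HS') => R' Hi Hc' Ht.
apply: (@transfer p d n T R' (FS S') (FS S) Ht (Hi _ HS)) => x Hx.
case: (Hsub x Hx) => [H|H]; [by left | right; exact: refuted_incons Hi H].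
Qed.

Lemma nth_cat3 (T : Type) (x0 y : T) s1 s2 :
  nth x0 (s1 ++ s2 ++ [:: y]) (size s1 + size s2) = y.
Proof.
rewrite nth_cat ltnNge leq_addr /= addKn nth_cat ltnn subnn //.
Qed.

Ltac incat := move=> x; rewrite /FS /= ?map_cat; rewrite ?In_cat /= ?In_cat /=; tauto.

Lemma local p d n T P R m : goodP p d n T P -> consistent p n R -> m < size P ->
  In (Cm P m, true) R -> In (phiS (nth dflt P m), false) R -> PW p d n T R 8.
Proof.
move=> HG Hc Hm HC HS.
have HG' := HG; case: HG' => [HR [HGf _]].
have HinS : In (nth dflt P m) P := In_nth dflt Hm.
have Hm' : m <= size P := ltnW Hm.
move: HS (HR m Hm) HinS; move: (nth dflt P m) => S HS Hr HinS.
case: Hr HinS HS => [phi|psi Hpsi|psi Hpsi|phi G D Hin|phi G D Hin|phi G D Hin|phi G D Hin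
  |G1 G2 phi psi D Hin|G D1 D2 phi psi Hin|phi G D Hin1 Hin2|phi G D Hin|phi G D Hin
  |fs G D Hall|fs phi G D Hfs Hin] HinS HS.
-
  apply: (PW_le (t := 2)) => //.
  apply: (ask_comp (fs := [:: Neg phi; phi]) (j := 0)); [exact: HS|by []|] => /= Hc1.
  apply: (ask_comp (fs := [:: Neg phi; phi]) (j := 1)); [exact: In_app_l HS|by []|] => /= Hc2.
  by have := cons_L1 Hc2 (In_last _ _) (In_app_l _ (In_last _ _)).
-
  apply: (PW_le (t := 1)) => //.
  apply: (ask_comp (fs := [:: psi]) (j := 0)); [exact: HS|by []|] => /= Hc1.
  by have := cons_L4 Hc1 (In_last _ _) Hpsi.
-
  apply: (PW_le (t := 1)) => //.
  apply: (ask_comp (fs := [:: psi]) (j := 0)); [exact: HS|by []|] => /= Hc1.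
  by have := cons_L3 Hc1 (In_last _ _) Hpsi.
- apply: (PW_le (t := 5)) => //.
  apply: (prem_case (S' := (G, D)) HG Hc Hm' HC HS Hin); incat.
- apply: (PW_le (t := 5)) => //.
  apply: (prem_case (S' := (G, D)) HG Hc Hm' HC HS Hin); incat.
- apply: (PW_le (t := 5)) => //.
  apply: (prem_case HG Hc Hm' HC HS Hin); incat.
- apply: (PW_le (t := 5)) => //.
  apply: (prem_case HG Hc Hm' HC HS Hin); incat.
- apply: (PW_le (t := 5)) => //.
  apply: (prem_case HG Hc Hm' HC HS Hin); incat.
- apply: (PW_le (t := 5)) => //.
  apply: (prem_case HG Hc Hm' HC HS Hin); incat.
-
  apply: (PW_le (t := 6)) => //.
  apply: (ask_val (phi := phi)).
    apply: (HGf _ phi (In_take Hin1)); rewrite /= In_cat /= In_cat /=; tauto.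
  case=> Hc1.
  + apply: (prem_case HG Hc1 Hm' (In_app_l _ HC) (In_app_l _ HS) Hin2).
    move=> x; rewrite /FS /= => [[<-|Hx]]; last by left.
    by right; right; left; exists phi; split => //; exact: In_last.
  + apply: (prem_case HG Hc1 Hm' (In_app_l _ HC) (In_app_l _ HS) Hin1).
    move=> x; rewrite /FS /= In_cat In_cat /= => [[Hx|[Hx|[<-|[]]]]].
    * by left; apply/In_cat; left.
    * by left; apply/In_cat; right.
    * by right; left; exact: In_last.
-
  apply: (PW_le (t := 7)) => //.
  apply: (ask_comp (fs := FS (Neg phi :: G, D)) (j := 0)); [exact: HS|by []|] => /= Hc1.
  apply: (ask_val (phi := Neg phi)).
    by apply: (HGf _ (Neg phi) HinS); left.
  move=> b Hc2.
  have Eb : b = true.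
    by have := cons_L1 Hc2 (In_last _ _) (In_app_l _ (In_last _ _)); case: (b).
  subst b.
  apply: (prem_case HG Hc2 Hm' (In_app_l _ (In_app_l _ HC)) (In_app_l _ (In_app_l _ HS)) Hin).
  move=> x; rewrite /FS /= In_cat In_cat /= => [[Hx|[Hx|[<-|[]]]]].
  * by left; right; apply/In_cat; left.
  * by left; right; apply/In_cat; right.
  * by right; right; right; exact: In_last.
- apply: (PW_le (t := 5)) => //.
  apply: (prem_case HG Hc Hm' HC HS Hin); incat.
-
  apply: (PW_le (t := 8)) => //.
  apply: (ask_comp (fs := FS (Or fs :: G, D)) (j := 0)); [exact: HS|by []|] => /= Hc1.
  apply: (ask_val (phi := Or fs)).
    by apply: (HGf _ (Or fs) HinS); left.
  move=> b Hc2.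
  have Eb : b = true.
    by have := cons_L1 Hc2 (In_last _ _) (In_app_l _ (In_last _ _)); case: (b).
  subst b.
  apply: (ask_wit (fs := fs)); first exact: In_last.
  move=> i Hi Hc3.
  have Hin := Hall _ (In_nth (Var 0 0) Hi).
  apply: (prem_case HG Hc3 Hm' (In_app_l _ (In_app_l _ (In_app_l _ HC)))
            (In_app_l _ (In_app_l _ (In_app_l _ HS))) Hin).
  move=> x; rewrite /FS /= => [[<-|Hx]].
  * by right; right; left; exists (nth (Var 0 0) fs i); split => //; exact: In_last.
  * by left; right.
-
  apply: (PW_le (t := 7)) => //.
  apply: (ask_comp (fs := FS (G, D ++ [:: Or fs])) (j := size (map Neg G) + size D));
    [exact: HS| by rewrite /FS /= !size_cat /=; lia|].
  rewrite /FS /= nth_cat3 => Hc1.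
  have [k [Hk Ek]] := nth_In (Var 0 0) Hfs.
  apply: (ask_comp (fs := fs) (j := k)); [exact: In_last|exact: Hk|].
  rewrite Ek => Hc2.
  apply: (prem_case HG Hc2 Hm' (In_app_l _ (In_app_l _ HC)) (In_app_l _ (In_app_l _ HS)) Hin).
  move=> x; rewrite /FS /= In_cat In_cat /= => [[Hx|[Hx|[<-|[]]]]].
  * by left; apply/In_cat; left.
  * by left; apply/In_cat; right; apply/In_cat; left.
  * by right; left; exact: In_last.
Qed.

Lemma finish p d n T P R m : goodP p d n T P -> consistent p n R -> m < size P ->
  In (Cm P m, true) R -> In (Cm P m.+1, false) R -> PW p d n T R 11.
Proof.
move=> HG Hc Hm HC HC1.
have HG' := HG; case: HG' => [_ [_ [Hphi HO]]].
apply: (ask_val (phi := Om P m.+1)); first by case: (HO m.+1 Hm).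
move=> b Hc1.
have Eb : b = true.
  by have := cons_L1 Hc1 (In_last _ _) (In_app_l _ HC1); case: (b).
subst b.
apply: (ask_wit (fs := map (fun S => Neg (phiS S)) (take m.+1 P))); first exact: In_last.
move=> j; rewrite size_map size_takel // => Hj.
rewrite (nth_map dflt) ?size_takel // nth_take // => Hc2.
apply: (ask_val (phi := phiS (nth dflt P j))).
  by apply: Hphi; apply: In_nth; lia.
move=> b Hc3.
have Eb : b = false.
  by have := cons_L1 Hc3 (In_last _ _) (In_app_l _ (In_last _ _)); case: (b).
subst b.
have HCm : In (Cm P m, true) (((R ++ [:: (Om P m.+1, true)]) ++
   [:: (Neg (phiS (nth dflt P j)), true)]) ++ [:: (phiS (nth dflt P j), false)]).
  by do 3 apply: In_app_l.
case: (ltngtP j m) => Hjm; last first.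
- subst j. apply: (local HG _ Hm _ (In_last _ _)).
  + by [].
  + by do 3 apply: In_app_l.
- lia.
- apply: (PW_le (t := 2)) => //.
  apply: (ask_val (phi := Om P m)); first by case: (HO m (ltnW Hm)).
  move=> b Hc4.
  have Eb : b = false.
    by have := cons_L1 Hc4 (In_last _ _) (In_app_l _ HCm); case: (b).
  subst b.
  apply: (ask_comp (fs := map (fun S => Neg (phiS S)) (take m P)) (j := j)).
  + exact: In_last.
  + by rewrite size_map size_takel // ltnW.
  rewrite (nth_map dflt) ?size_takel ?(ltnW Hm) // nth_take // => Hc5.
  have := cons_L0 Hc5 (In_last _ _) (In_app_l _ (In_app_l _ (In_app_l _ (In_last _ _)))).
  by [].
Qed.

Lemma search p d n T P r : goodP p d n T P -> forall lo hi R, consistent p n R ->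
  lo < hi -> hi <= size P -> hi - lo <= 2 ^ r ->
  In (Cm P lo, true) R -> In (Cm P hi, false) R -> PW p d n T R (11 + r).
Proof.
move=> HG; have HG' := HG; case: HG' => [_ [_ [_ HO]]].
elim: r => [|r IH] lo hi R Hc Hlh Hh Hr Hlo Hhi.
  have E : hi = lo.+1 by rewrite expn0 in Hr; lia.
  subst hi; rewrite addn0. exact: (finish HG Hc Hh Hlo Hhi).
have [E|Hne] : hi = lo.+1 \/ lo.+1 < hi by lia.
  subst hi; apply: (PW_le (t := 11)); first by lia.
  exact: (finish HG Hc Hh Hlo Hhi).
set mid := lo + (hi - lo) %/ 2.
have Hmid : mid <= size P by rewrite /mid; lia.
rewrite addnS; apply: (ask_val (phi := Cm P mid)); first by case: (HO _ Hmid).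
rewrite expnS in Hr.
case=> Hc1.
- apply: (IH mid hi) => //.
  + rewrite /mid; lia.
  + rewrite /mid; lia.
  + exact: In_last.
  + exact: In_app_l.
- apply: (IH lo mid) => //.
  + rewrite /mid; lia.
  + rewrite /mid; lia.
  + exact: In_app_l.
  + exact: In_last.
Qed.

Lemma root p d n T P r : goodP p d n T P -> 0 < size P -> In dflt P ->
  size P <= 2 ^ r -> PW p d n T [::] (13 + r).
Proof.
move=> HG HP Hd Hr; have HG' := HG; case: HG' => [_ [_ [_ HO]]].
have Hc0 : consistent p n [::] by [].
rewrite (_ : 13 + r = (12 + r).+1) //.
apply: (ask_val (phi := Cm P 0)); first by case: (HO 0 (leq0n _)).
case=> Hc1; last first.
  apply: (PW_le (t := 2)); first by lia.
  apply: (ask_val (phi := Om P 0)); first by case: (HO 0 (leq0n _)).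
  move=> b Hc2.
  have Eb : b = true.
    by have := cons_L1 Hc2 (In_last _ _) (In_app_l _ (In_last _ _)); case: (b).
  subst b.
  apply: (ask_wit (fs := map (fun S => Neg (phiS S)) (take 0 P))); first exact: In_last.
  by move=> j; rewrite take0.
rewrite (_ : 12 + r = (11 + r).+1) //.
apply: (ask_val (phi := Cm P (size P))); first by case: (HO _ (leqnn _)).
case=> Hc2.
  apply: (PW_le (t := 4)); first by lia.
  apply: (get_prem (S' := dflt) HG Hc2 (leqnn _) (In_last _ _)).
    by rewrite take_size.
  move=> R' _ _ Ht.
  apply: (ask_wit (fs := [::])); first exact: Ht.
  by [].
apply: (search HG Hc2 HP (leqnn _)).
- by rewrite subn0.
- exact: In_app_l (In_last _ _).
- exact: In_last.
Qed.

Fixpoint sf (n : nat) (f : form) : form :=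
  match f with
  | Var i j => if (i < n.+1) && (j < n) then Var i j else Var 0 0
  | Neg g => Neg (sf n g)
  | Or fs => Or (map (sf n) fs)
  | Mod i fs => Mod i (map (sf n) fs)
  end.

Definition form_ind' (Pr : form -> Prop)
  (HV : forall i j, Pr (Var i j)) (HN : forall g, Pr g -> Pr (Neg g))
  (HO : forall fs, (forall g, In g fs -> Pr g) -> Pr (Or fs))
  (HM : forall i fs, (forall g, In g fs -> Pr g) -> Pr (Mod i fs)) : forall f, Pr f :=
  fix F f := match f with
  | Var i j => HV i j
  | Neg g => HN g (F g)
  | Or fs => HO fs ((fix G (l : list form) : forall g, In g l -> Pr g :=
        match l with
        | nil => fun g (H : In g nil) => False_ind _ H
        | h :: t => fun g H => match H with
                              | or_introl e => eq_ind h Pr (F h) g e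
                              | or_intror H' => G t g H'
                              end
        end) fs)
  | Mod i fs => HM i fs ((fix G (l : list form) : forall g, In g l -> Pr g :=
        match l with
        | nil => fun g (H : In g nil) => False_ind _ H
        | h :: t => fun g H => match H with
                              | or_introl e => eq_ind h Pr (F h) g e
                              | or_intror H' => G t g H'
                              end
        end) fs)
  end.

Lemma kind_sf n f : kind (sf n f) = kind f.
Proof. by case: f => //= i j; case: ifP. Qed.

Lemma depth_or_cons g gs :
  depth (Or (g :: gs)) = maxn (if kind g == 2 then depth g else (depth g).+1) (depth (Or gs)).
Proof. by []. Qed.

Lemma depth_mod_cons i g gs :
  depth (Mod i (g :: gs)) = maxn (if kind g == i.+3 then depth g else (depth g).+1) (depth (Mod i gs)).
Proof. by []. Qed.

Lemma depth_sf n f : depth (sf n f) = depth f.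
Proof.
elim/form_ind': f => [i j|g IH|fs IH|i fs IH].
- by rewrite /=; case: ifP.
- by rewrite /= kind_sf IH.
- elim: fs IH => [|g gs IHl] IH //.
  change (depth (Or (sf n g :: map (sf n) gs)) = depth (Or (g :: gs))).
  rewrite !depth_or_cons kind_sf IH; last by left.
  by have /= -> := IHl (fun g H => IH g (or_intror H)).
- elim: fs IH => [|g gs IHl] IH //.
  change (depth (Mod i (sf n g :: map (sf n) gs)) = depth (Mod i (g :: gs))).
  rewrite !depth_mod_cons kind_sf IH; last by left.
  by have /= -> := IHl (fun g H => IH g (or_intror H)).
Qed.

Lemma map_ext_In (T1 T2 : Type) (f g : T1 -> T2) s :
  (forall x, In x s -> f x = g x) -> map f s = map g s.
Proof.
elim: s => [|x s IH] H //=; rewrite H; last by left.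
by rewrite IH // => y Hy; apply: H; right.
Qed.

Lemma fsize_sf n f : fsize (sf n f) = fsize f.
Proof.
elim/form_ind': f => [i j|g IH|fs IH|i fs IH].
- by rewrite /=; case: ifP.
- by rewrite /= IH.
- by rewrite /= -map_comp (map_ext_In (g := fsize) IH).
- by rewrite /= -map_comp (map_ext_In (g := fsize) IH).
Qed.

Lemma wf_or p fs : wf p (Or fs) <-> forall g, In g fs -> wf p g.
Proof.
elim: fs => [|g gs IH]; first by split.
change (wf p g /\ wf p (Or gs) <-> forall g0, In g0 (g :: gs) -> wf p g0).
rewrite IH; split.
- by case=> H1 H2 g0 [<-|H]; [exact: H1|exact: H2].
- by move=> H; split; [apply: H; left|move=> g0 Hg; apply: H; right].
Qed.

Lemma wf_mod p i fs : wf p (Mod i fs) <-> i < p /\ wf p (Or fs).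
Proof. by []. Qed.

Lemma php_or n fs : php_vars n (Or fs) <-> forall g, In g fs -> php_vars n g.
Proof.
elim: fs => [|g gs IH]; first by split.
change (php_vars n g /\ php_vars n (Or gs) <-> forall g0, In g0 (g :: gs) -> php_vars n g0).
rewrite IH; split.
- by case=> H1 H2 g0 [<-|H]; [exact: H1|exact: H2].
- by move=> H; split; [apply: H; left|move=> g0 Hg; apply: H; right].
Qed.

Lemma php_mod n i fs : php_vars n (Mod i fs) <-> php_vars n (Or fs).
Proof. by []. Qed.

Lemma wf_sf p n f : wf p f -> wf p (sf n f).
Proof.
elim/form_ind': f => [i j|g IH|fs IH|i fs IH].
- by rewrite /=; case: ifP.
- exact: IH.
- move/wf_or => H; apply/wf_or => g /In_map [g0 [Hg0 ->]]; apply: IH => //; exact: H.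
- case/wf_mod => Hi /wf_or H; apply/wf_mod; split => //.
  apply/wf_or => g /In_map [g0 [Hg0 ->]]; apply: IH => //; exact: H.
Qed.

Lemma php_sf n f : 0 < n -> php_vars n (sf n f).
Proof.
move=> Hn; elim/form_ind': f => [i j|g IH|fs IH|i fs IH].
- rewrite /=; case: ifP => [/andP [H1 H2]|_] //=.
- exact: IH.
- by apply/php_or => g /In_map [g0 [Hg0 ->]]; apply: IH.
- by apply/php_mod/php_or => g /In_map [g0 [Hg0 ->]]; apply: IH.
Qed.

Lemma In_mem (x : nat) s : In x s -> x \in s.
Proof. elim: s => [|y s IH] //= [->|H]; rewrite in_cons ?eqxx //; by rewrite IH ?orbT. Qed.

Lemma negPHP_sf n psi : negPHP n psi -> sf n psi = psi.
Proof.
case=> [[i [Hi ->]]|[[i1 [i2 [j [H1 [H2 [_ [Hj ->]]]]]]]|[i [j1 [j2 [Hi [H1 [H2 [_ ->]]]]]]]]].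
- rewrite /= -map_comp; congr Or; apply: map_ext_In => j /In_mem.
  by rewrite mem_iota add0n => Hj /=; rewrite Hi Hj.
- by rewrite /= H1 H2 Hj.
- by rewrite /= Hi H1 H2.
Qed.

Lemma mod_axiom_sf p n psi : mod_axiom p psi -> mod_axiom p (sf n psi).
Proof.
case=> [->|[[i [Hi ->]]|[i [G [phi [Hi ->]]]]]].
- by left.
- by right; left; exists i.
- right; right; exists i, (map (sf n) G), (sf n phi); split => //.
  by rewrite /Equiv /And /= map_cat.
Qed.

Definition sS n (S : sequent) : sequent := (map (sf n) S.1, map (sf n) S.2).

Lemma rule_inst_sf p n prev S : rule_inst p n prev S ->
  rule_inst p n (map (sS n) prev) (sS n S).
Proof.
have Hm : forall G D, In (G, D) prev -> In (map (sf n) G, map (sf n) D) (map (sS n) prev).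
  by move=> G D H; apply: (In_map_l (sS n) H).
case=> [phi|psi Hpsi|psi Hpsi|phi G D Hin|phi G D Hin|phi G D Hin|phi G D Hin
  |G1 G2 phi psi D Hin|G D1 D2 phi psi Hin|phi G D Hin1 Hin2|phi G D Hin|phi G D Hin
  |fs G D Hall|fs phi G D Hfs Hin]; rewrite /sS /= ?map_cat /=.
- exact: R_init.
- by apply: R_hyp; rewrite negPHP_sf.
- by apply: R_modax; apply: mod_axiom_sf.
- exact: R_weakl (Hm _ _ Hin).
- exact: R_weakr (Hm _ _ Hin).
- by apply: R_contrl; have := Hm _ _ Hin.
- by apply: R_contrr; have := Hm _ _ Hin; rewrite map_cat.
- by apply: R_exchl; have := Hm _ _ Hin; rewrite map_cat.
- by apply: R_exchr; have := Hm _ _ Hin; rewrite map_cat.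
- apply: (@R_cut p n _ (sf n phi)); first by have := Hm _ _ Hin1; rewrite map_cat.
  exact: (Hm _ _ Hin2).
- by apply: R_negl; have := Hm _ _ Hin; rewrite map_cat.
- by apply: R_negr; have := Hm _ _ Hin.
- apply: R_orl => phi' /In_map [phi [Hphi ->]].
  exact: (Hm _ _ (Hall _ Hphi)).
- apply: (@R_orr p n _ _ (sf n phi)); first exact: In_map_l.
  by have := Hm _ _ Hin; rewrite map_cat.
Qed.

Lemma sumn_fsize_sf n l : sumn (map fsize (map (sf n) l)) = sumn (map fsize l).
Proof. by rewrite -map_comp (map_ext_In (g := fsize)) // => x _ /=; rewrite fsize_sf. Qed.

Lemma proof_size_sS n P : proof_size (map (sS n) P) = proof_size P.
Proof.
rewrite /proof_size -map_comp; congr sumn; apply: eq_map => S /=.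
by rewrite /seq_size /= !sumn_fsize_sf.
Qed.

Lemma is_ref_sf p n d P : is_refutation p n d P -> is_refutation p n d (map (sS n) P).
Proof.
case=> [Hr [[P' EP] Hf]]; split; [|split].
- move=> k; rewrite size_map => Hk.
  rewrite -map_take (nth_map dflt) //; exact: rule_inst_sf (Hr k Hk).
- by exists (map (sS n) P'); rewrite EP map_cat.
- move=> S phi /In_map [S0 [HS0 ->]]; rewrite /sS /= -map_cat => /In_map [phi0 [Hphi0 ->]].
  case: (Hf _ _ HS0 Hphi0) => H1 H2; split; first exact: wf_sf.
  by rewrite depth_sf.
Qed.

Lemma In_sumn (T : Type) (f : T -> nat) x l : In x l -> f x <= sumn (map f l).
Proof. elim: l => [|y l IH] //= [->|H]; first exact: leq_addr. by rewrite (leq_trans (IH H)) ?leq_addl. Qed.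

Lemma sumn_le (T : Type) (f g : T -> nat) l : (forall x, In x l -> f x <= g x) ->
  sumn (map f l) <= sumn (map g l).
Proof.
elim: l => [|y l IH] //= H; apply: leq_add; first by apply: H; left.
by apply: IH => x Hx; apply: H; right.
Qed.

Lemma sumn_take (T : Type) (g : T -> nat) m l : sumn (map g (take m l)) <= sumn (map g l).
Proof. by rewrite -{2}(cat_take_drop m l) map_cat sumn_cat leq_addr. Qed.

Lemma fsize_gt0 f : 0 < fsize f.
Proof. by case: f. Qed.

Lemma size_le_sumn l : size l <= sumn (map fsize l).
Proof. elim: l => [|y l IH] //=; have := fsize_gt0 y; lia. Qed.

Lemma sumn_neg l : sumn (map fsize (map Neg l)) = sumn (map fsize l) + size l.
Proof. elim: l => [|y l IH] //=; rewrite IH; lia. Qed.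

Lemma depth_neg g : depth (Neg g) <= (depth g).+1.
Proof. by rewrite /=; case: ifP. Qed.

Lemma depth_or_le k fs : (forall g, In g fs -> depth g <= k) -> depth (Or fs) <= k.+1.
Proof.
elim: fs => [|g gs IH] H //.
rewrite depth_or_cons geq_max; apply/andP; split.
- have := H g (or_introl erefl); case: ifP => _; lia.
- by apply: IH => g0 Hg; apply: H; right.
Qed.

Definition fgood p d n (x : form) := wf p x /\ php_vars n x /\ depth x <= d.

Lemma goodP_of p d n T P s :
  (forall m, m < size P -> rule_inst p n (take m P) (nth dflt P m)) ->
  (forall S x, In S P -> In x (S.1 ++ S.2) -> fgood p d n x) ->
  proof_size P = s -> 0 < s -> 5 * s <= 2 ^ T ->
  goodP p (d + 5) n T P.
Proof.
move=> Hr Hf Hs Hs0 HT.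
have HSs : forall S, In S P -> seq_size S <= s.
  by move=> S HS; rewrite -Hs; exact: (In_sumn seq_size HS).
have Hx : forall S x, In S P -> In x (S.1 ++ S.2) -> fsize x <= seq_size S.
  move=> S x HS /In_cat [H|H]; rewrite /seq_size.
  - by have := In_sumn fsize H; lia.
  - by have := In_sumn fsize H; lia.
have HFS : forall S g, In S P -> In g (FS S) -> fgood p (d + 1) n g.
  move=> S g HS; rewrite /FS => /In_cat [/In_map [y [Hy ->]]|Hg].
  - have [H1 [H2 H3]] := Hf S y HS (proj2 (In_cat _ _ _) (or_introl Hy)).
    by split => //; split => //; have := depth_neg y; lia.
  - have [H1 [H2 H3]] := Hf S g HS (proj2 (In_cat _ _ _) (or_intror Hg)).
    by split => //; split => //; lia.
have HphiS : forall S, In S P -> fgood p (d + 2) n (phiS S).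
  move=> S HS; split; [|split].
  - by apply/wf_or => g Hg; case: (HFS _ _ HS Hg).
  - by apply/php_or => g Hg; case: (HFS _ _ HS Hg) => _ [].
  - have -> : d + 2 = (d + 1).+1 by lia.
    by apply: depth_or_le => g Hg; case: (HFS _ _ HS Hg) => _ [].
have HphiSz : forall S, fsize (phiS S) <= 2 * seq_size S.
  move=> S; rewrite /phiS /FS /= map_cat sumn_cat sumn_neg /seq_size.
  have := size_le_sumn S.1; lia.
have HO : forall m, fgood p (d + 4) n (Om P m) /\ fsize (Om P m) <= 3 * s + 1.
  move=> m; split; [split; [|split]|].
  - apply/wf_or => g /In_map [S [HS ->]]; by case: (HphiS _ (In_take HS)).
  - apply/php_or => g /In_map [S [HS ->]]; by case: (HphiS _ (In_take HS)) => _ [].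
  - have -> : d + 4 = (d + 3).+1 by lia.
    apply: depth_or_le => g /In_map [S [HS ->]].
    case: (HphiS _ (In_take HS)) => _ [_ H]; have := depth_neg (phiS S); lia.
  - rewrite /Om /= -map_comp.
    have H1 : sumn (map (fsize \o (fun S => Neg (phiS S))) (take m P))
              <= sumn (map (fun S => 3 * seq_size S) (take m P)).
      apply: sumn_le => S _; change ((fsize (phiS S)).+1 <= 3 * seq_size S).
      have : 0 < seq_size S by []. have := HphiSz S; lia.
    have H2 : sumn (map (fun S => 3 * seq_size S) (take m P)) = 3 * sumn (map seq_size (take m P)).
      by elim: (take m P) => [|y l IH] //=; rewrite IH; lia.
    have H3 := sumn_take seq_size m P.
    rewrite /proof_size in Hs; lia.
split; [exact: Hr|split; [|split]].
- move=> S x HS Hin; have [H1 [H2 H3]] := Hf S x HS Hin.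
  split => //; split => //; split; first lia.
  have := Hx S x HS Hin; have := HSs S HS; lia.
- move=> S HS; have [H1 [H2 H3]] := HphiS S HS.
  split => //; split => //; split; first lia.
  apply: leq_trans (HphiSz S) _; apply: leq_trans HT; have := HSs S HS; lia.
- move=> m _; have [[H1 [H2 H3]] H4] := HO m; split.
  + split => //; split => //; split; first lia. lia.
  + split => //; split => //; split.
    * rewrite /Cm; have := depth_neg (Om P m); lia.
    * rewrite /Cm; change ((fsize (Om P m)).+1 <= 2 ^ T); apply: leq_trans HT; lia.
Qed.

Lemma no_empty p n S : rule_inst p n [::] S -> S <> ([::], [::]).
Proof.
case=> [phi|psi _|psi _|phi G D []|phi G D []|phi G D []|phi G D []|G1 G2 phi psi D []
  |G D1 D2 phi psi []|phi G D []|phi G D []|phi G D []|fs G D H|fs phi G D _ []] //.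
Qed.

Lemma size_le_proof_size P : size P <= proof_size P.
Proof. elim: P => [|S P IH] //=; rewrite /proof_size /= -/(proof_size P); rewrite /seq_size; lia. Qed.

Unset Implicit Arguments.

Theorem lemma2p1 : forall p : nat, prime p ->
  exists c c' : nat, 0 < c /\ 0 < c' /\
    forall d n s : nat, 2 <= d -> 1 <= n -> 1 <= s ->
      (exists P : list sequent, is_refutation p n d P /\ proof_size P = s) ->
      prover_wins p (d + c) n (c' * trunc_log 2 s).
Proof.
move=> p _; exists 5, 15; split => //; split => //.
move=> d n s Hd Hn Hs [P0 [Href0 Hsz0]].
set P := map (sS n) P0.
have Href : is_refutation p n d P := is_ref_sf Href0.
have Hsz : proof_size P = s by rewrite /P proof_size_sS.
case: Href => [Hr [[P' EP] Hf]].
have Hf' : forall S x, In S P -> In x (S.1 ++ S.2) -> fgood p d n x.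
  move=> S x HS Hx; have [H1 H2] := Hf S x HS Hx; split => //; split => //.
  move: HS Hx => /In_map [S0 [_ ->]]; rewrite /sS /= -map_cat => /In_map [x0 [_ ->]].
  exact: php_sf.
have HP' : P' <> [::].
  move=> E; have := Hr 0; rewrite EP E /= => H.
  by apply: (no_empty (H erefl)).
have H0 : 0 < size P' by move: HP'; case: (P').
have HsP : 2 <= size P.
  by rewrite EP size_cat /= addn1 ltnS.
have Hs2 : 2 <= s by rewrite -Hsz; apply: leq_trans HsP (size_le_proof_size _).
set k := trunc_log 2 s.
have Hk : 1 <= k by apply: trunc_log_max.
have Hsk : s < 2 ^ k.+1 by apply: trunc_log_ltn.
have HT : 5 * s <= 2 ^ (15 * k).
  apply: leq_trans (_ : 2 ^ (k.+1 + 3) <= _); last by apply: leq_pexp2l => //; lia.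
  rewrite expnD; lia.
have HG : goodP p (d + 5) n (15 * k) P.
  apply: (goodP_of Hr Hf' Hsz) => //; lia.
apply: PW_win.
apply: (PW_le (t := 13 + k.+1)); first lia.
apply: (root HG) => //.
- lia.
- by rewrite EP; apply/In_cat; right; left.
- have := size_le_proof_size P; rewrite Hsz; lia.
Qed.
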